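(* Fix $n\ge2$. Let $p:S^n\to\mathbb{RP}^n$ be the standard double cover and $q:\mathbb R\to S^1$, $q(\theta)=e^{i\theta}$. Then the product covering $p\times q:S^n\times\mathbb R\to\mathbb{RP}^n\times S^1$ is not equivalent (as a covering over $\mathbb{RP}^n\times S^1$) to any Weierstrass entire covering.
   Context: For a topological space $X$, a Weierstrass entire family is a continuous map $F:X\times\mathbb C\to\mathbb C$ such that for each $x\in X$, $z\mapsto F(x,z)$ is entire, and such that the zero locus $Z(F)=\{(x,z):F(x,z)=0\}$ with the first projection $p_1:Z(F)\to X$ is a countably infinite-sheeted covering. This covering is the Weierstrass entire covering associated to $F$. *)

(* Defs.v *)
From HB Require Import structures.
From mathcomp Require Import all_boot all_order all_algebra generic_quotient.
From mathcomp Require Import complex.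
From mathcomp Require Import all_classical all_reals all_analysis.
Set Implicit Arguments. Unset Strict Implicit. Unset Printing Implicit Defensive.
Import Order.TTheory GRing.Theory Num.Theory.
Import numFieldNormedType.Exports.
Local Open Scope ring_scope.
Local Open Scope classical_set_scope.

Definition covering_map (E B : topologicalType) (p : E -> B) : Prop :=
  continuous p /\
  forall b : B, exists U : set B, [/\ open U, U b &
    exists (I : Type) (V : I -> set E),
      [/\ p @^-1` U = \bigcup_(i in setT) V i,
          (forall i, open (V i)),
          (forall i j, i <> j -> V i `&` V j = set0) &
          (forall i, exists g : B -> E,
             [/\ (forall x, V i x -> g (p x) = x),
                 (forall y, U y -> V i (g y) /\ p (g y) = y) &
                 {within U, continuous g}])]].

Definition countably_infinite_sheeted_covering (E B : topologicalType)
    (p : E -> B) : Prop :=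
  covering_map p /\ forall b : B, ([set e | p e = b] #= [set: nat])%card.

Definition equivalent_coverings (E1 E2 B : topologicalType)
    (p1 : E1 -> B) (p2 : E2 -> B) : Prop :=
  exists (h : E1 -> E2) (g : E2 -> E1),
    [/\ continuous h, continuous g, cancel h g, cancel g h &
        forall e, p2 (h e) = p1 e].

Definition Cplx (R : realType) : Type := (R[i])^o.

Section Weierstrass.
Variables (R : realType) (X : topologicalType).
Local Notation C := (Cplx R).

Definition zero_locus (F : X * C -> C) : set (X * C)%type :=
  [set xz | F xz = 0].

Definition ZF (F : X * C -> C) : topologicalType := set_type (zero_locus F).
Definition proj1Z (F : X * C -> C) : ZF F -> X :=
  fun xz => (set_val xz).1.

Definition weierstrass_entire_family (F : X * C -> C) : Prop :=
  [/\ continuous F,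
      (forall (x : X) (z : C), derivable (fun w : C => F (x, w)) z 1) &
      countably_infinite_sheeted_covering (@proj1Z F)].
End Weierstrass.

Section Spaces.
Variables (R : realType) (n : nat).

Definition sphere : set 'rV[R]_n.+1 := [set x | \sum_i x ord0 i ^+ 2 = 1].
Definition Sph : topologicalType := set_type sphere.

Definition antipodal (x y : Sph) : bool :=
  (x == y) || (set_val x == - set_val y).

Lemma antipodal_refl : reflexive antipodal.
Proof. by move=> x; rewrite /antipodal eqxx. Qed.

Lemma antipodal_sym : symmetric antipodal.
Proof.
move=> x y; rewrite /antipodal eq_sym; congr (_ || _).
apply/eqP/eqP => ->; by rewrite opprK.
Qed.

Lemma antipodal_trans : transitive antipodal.
Proof.
move=> y x z; rewrite /antipodal => /orP[/eqP->//|/eqP xy] /orP[/eqP<-|/eqP yz].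
  by rewrite xy eqxx orbT.
apply/orP; left; apply/eqP.
move: x y z xy yz => [x hx] [y hy] [z hz]; rewrite !set_valE /= => xy yz.
move: hx; rewrite xy yz opprK => hx.
by congr exist; apply: Prop_irrelevance.
Qed.

Canonical antipodal_rel := EquivRel antipodal antipodal_refl antipodal_sym
  antipodal_trans.

Definition RP : topologicalType :=
  quotient_topology {eq_quot antipodal_rel}%qT.

Definition proj_RP : Sph -> RP := \pi_RP%qT.
End Spaces.

Section Circle.
Variable R : realType.
Local Notation C := (Cplx R).
Definition circle : set C := [set z | `|z| = 1].
Definition S1 : topologicalType := set_type circle.

Lemma expi_circle (t : R) : circle ((cos t +i* sin t)%C : C).
Proof.
rewrite /circle /= -[`|(_ +i* _)%C|]/(Num.sqrt (_ + _))%:C%C.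
by rewrite cos2Dsin2 sqrtr1.
Qed.

Definition expi_S1 (t : R) : S1 := @exist C (fun z : C => z \in circle) _ (mem_set (expi_circle t)).
End Circle.

Definition prod_cover (R : realType) (n : nat) :
    (Sph R n * R)%type -> (RP R n * S1 R)%type :=
  fun xt => (proj_RP xt.1, expi_S1 xt.2).

(* Main.v *)
Require Import Defs.
From HB Require Import structures.
From mathcomp Require Import all_boot all_order all_algebra generic_quotient.
From mathcomp Require Import complex.
From mathcomp Require Import all_classical all_reals all_analysis.
From mathcomp Require Import zify ring lra.
Import numFieldNormedType.Exports.
Set Implicit Arguments. Unset Strict Implicit. Unset Printing Implicit Defensive.
Import Order.TTheory GRing.Theory Num.Theory.
Local Open Scope ring_scope.
Local Open Scope classical_set_scope.
Section Core.
Variable R : realType.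

Lemma unif (k : R -> R -> R) : continuous (fun p : R * R => k p.1 p.2) ->
  exists m : nat, forall x t : R, x \in `[-(pi/2), pi/2] -> t \in `[0, pi] ->
    forall x', `|x - x'| <= pi / m.+1%:R -> `|k x t - k x' t| < 1/2.
Proof.
move=> hk.
have cpt : compact (`[-(pi/2), pi/2] `*` `[0, pi] : set (R * R)).
  by apply: compact_setX; apply: segment_compact.
move/compact_near_coveringP: cpt => /(_ nat \oo
   (fun m (y : R * R) => forall x', `|y.1 - x'| <= pi / m.+1%:R ->
      `|k y.1 y.2 - k x' y.2| < 1/2) _) [].
- move=> [x0 t0] _.
  have /cvgr_dist_lt /(_ (1/4)) := hk (x0, t0); move=> /(_ ltac:(lra)).
  move=> /nbhs_ballP [e e0 He].
  have e0' : 0 < e := e0.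
  have [N HN] : exists N : nat, pi / N.+1%:R < e / 2.
    exists (Num.truncn (pi / (e/2))).
    have h1 := truncnS_gt (pi / (e / 2)).
    have h2 : 0 < e / 2 by lra.
    have h3 := pi_gt0 R.
    rewrite ltr_pdivrMr ?ltr0Sn //.
    rewrite ltr_pdivrMr // in h1. rewrite mulrC. lra.
  exists (ball (x0, t0) (e/2), [set m | (N <= m)%N]).
    split; first by apply: nbhsx_ballx; lra.
    exact: nbhs_infty_ge.
  move=> [[x t] m] /= [[bx bt] hm] x' hx'.
  have hpm : pi / m.+1%:R <= pi / N.+1%:R :> R.
     rewrite (ler_pM2l (pi_gt0 R)).
    by rewrite lef_pV2 ?posrE ?ltr0Sn // ler_nat ltnS.
  move: bx bt; rewrite /ball /= => bx bt.
  have H1 := He (x, t); have H2 := He (x', t).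
  rewrite /ball /= in H1 H2.
  have /H1 {}H1 : `|x0 - x| < e /\ `|t0 - t| < e by split; lra.
  have /H2 {}H2 : `|x0 - x'| < e /\ `|t0 - t| < e.
    split; last lra.
    have h4 : `|x - x'| < e / 2 by apply: (le_lt_trans hx'); apply: (le_lt_trans hpm HN).
    apply: (le_lt_trans (ler_distD x x0 x')); rewrite [e in _ < e]splitr.
    exact: ltrD.
  apply: (le_lt_trans (ler_distD (k x0 t0) (k x t) (k x' t))).
  rewrite (distrC (k x t)); apply: (lt_le_trans (ltrD H1 H2)); lra.
- move=> M _ H; exists M => x t hx ht.
  have := H M (leqnn M) (x, t). apply. by split=> /=; [exact: set_mem hx|exact: set_mem ht].
Qed.
End Core.
Section Core2.
Variable R : realType.

Lemma atan_cs (r i : R) : 0 < r -> r ^+ 2 + i ^+ 2 = 1 ->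
  cos (atan (i / r)) = r /\ sin (atan (i / r)) = i.
Proof.
move=> r0 hri.
have rn0 : r != 0 by rewrite gt_eqF.
have hc : cos (atan (i / r)) = r.
  rewrite cos_atan.
  have -> : 1 + (i / r) ^+ 2 = (r^-1) ^+ 2.
    apply: (@mulIf _ (r ^+ 2)); first by rewrite expf_neq0.
    rewrite mulrDl mul1r exprMn -!exprMn mulVf // expr1n.
    rewrite -hri; field; exact: rn0.
  by rewrite sqrtr_sqr ger0_norm ?invr_ge0 ?ltW // invrK.
split => //.
have := atanK (i / r); rewrite /tan hc.
move: (atan (i / r)) => a h.
by rewrite -(divfK rn0 i) -h divfK.
Qed.

Lemma cont_sum (f : nat -> R -> R) (n : nat) :
  (forall j, continuous (f j)) -> continuous (fun t => \sum_(0 <= j < n) f j t).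
Proof.
move=> hf; elim: n => [|n IH].
  by under eq_fun do rewrite big_nil; exact: cst_continuous.
under eq_fun do rewrite big_nat_recr //=.
by move=> x; apply: cvgD; [exact: IH | exact: hf].
Qed.

End Core2.
Section Core3.
Variable R : realType.

Lemma alg_step (x1 x2 y1 y2 z1 z2 : R) : x1 ^+ 2 + x2 ^+ 2 = 1 ->
  (x1*y1+x2*y2)*(z1*x1+z2*x2) - (x2*y1-x1*y2)*(z2*x1-z1*x2) = z1*y1+z2*y2 /\
  (x2*y1-x1*y2)*(z1*x1+z2*x2) + (x1*y1+x2*y2)*(z2*x1-z1*x2) = z2*y1-z1*y2.
Proof.
move=> h; split.
  have -> : (x1*y1+x2*y2)*(z1*x1+z2*x2) - (x2*y1-x1*y2)*(z2*x1-z1*x2)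
     = (x1 ^+ 2 + x2 ^+ 2) * (z1*y1+z2*y2) by ring.
  by rewrite h mul1r.
have -> : (x2*y1-x1*y2)*(z1*x1+z2*x2) + (x1*y1+x2*y2)*(z2*x1-z1*x2)
   = (x1 ^+ 2 + x2 ^+ 2) * (z2*y1-z1*y2) by ring.
by rewrite h mul1r.
Qed.

Lemma cont_sum' (f : nat -> R -> R) (n : nat) :
  (forall j, (j < n)%N -> continuous (f j)) ->
  continuous (fun t => \sum_(0 <= j < n) f j t).
Proof.
elim: n => [|n IH] hf.
  by under eq_fun do rewrite big_nil; exact: cst_continuous.
under eq_fun do rewrite big_nat_recr //=.
move=> x; apply: cvgD; last exact: hf.
by apply: IH => j hj; apply: hf; exact: ltnW.
Qed.

Lemma clamp_cont : continuous (fun t : R => Num.max 0 (Num.min pi t)).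
Proof.
move=> x.
apply: (@continuous_max _ _ (fun _ => 0) (fun t => Num.min pi t)).
  exact: cst_continuous.
apply: (@continuous_min _ _ (fun _ => pi) (fun t => t)).
  exact: cst_continuous.
by [].
Qed.

End Core3.
Section Core4.
Variable R : realType.

Lemma core (k1 k2 : R -> R -> R) :
  continuous (fun p : R * R => k1 p.1 p.2) ->
  continuous (fun p : R * R => k2 p.1 p.2) ->
  (forall x t, k1 x t ^+ 2 + k2 x t ^+ 2 = 1) ->
  (forall t, k1 (- (pi / 2)) t = - k1 (pi / 2) t) ->
  (forall t, k2 (- (pi / 2)) t = - k2 (pi / 2) t) ->
  (forall x, k1 x pi = k1 (- x) 0) ->
  (forall x, k2 x pi = k2 (- x) 0) -> False.
Proof.
move=> c1 c2 hu o1 o2 r1 r2.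
have [m1 H1] := unif c1; have [m2 H2] := unif c2.
pose N := (maxn m1 m2).+1.
have pi0 := pi_gt0 R.
pose h : R := pi / N%:R.
have h0 : 0 < h by rewrite divr_gt0 // ltr0Sn.
have hNh : N%:R * h = pi by rewrite /h mulrC divfK // pnatr_eq0.
pose phi (j : nat) : R := - (pi / 2) + j%:R * h.
have phiS j : phi j.+1 = phi j + h by rewrite /phi -addn1 natrD; ring.
have phi0 : phi 0%N = - (pi / 2) by rewrite /phi mul0r addr0.
have phiN : phi N = pi / 2 by rewrite /phi hNh; lra.
have phi_in j : (j <= N)%N -> (phi j \in `[- (pi / 2), pi / 2])%R.
  move=> hj; rewrite in_itv /=; apply/andP; split.
    by rewrite /phi lerDl mulr_ge0 // ltW.
  rewrite -phiN /phi lerD2l; apply: ler_wpM2r; first exact: ltW.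
  by rewrite ler_nat.
pose T (t : R) : R := Num.max 0 (Num.min pi t).
have T_in t : (T t \in `[0, pi])%R.
  rewrite in_itv /=; apply/andP; split.
    by rewrite /T le_max lexx.
  by rewrite /T ge_max (ltW pi0) ge_min lexx.
have Tpi : T pi = pi by rewrite /T minxx max_r // ltW.
have T0 : T 0 = 0 by rewrite /T min_r ?maxxx // ltW.
have hstep j : `|phi j - phi j.+1| <= pi / m1.+1%:R /\
               `|phi j - phi j.+1| <= pi / m2.+1%:R.
  rewrite phiS opprD addrA subrr add0r normrN gtr0_norm //; split.
    rewrite /h (ler_pM2l pi0) lef_pV2 ?posrE ?ltr0Sn // ler_nat ltnS.
    exact: leq_maxl.
  rewrite /h (ler_pM2l pi0) lef_pV2 ?posrE ?ltr0Sn // ler_nat ltnS.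
  exact: leq_maxr.
pose a1 j t := k1 (phi j) (T t).
pose a2 j t := k2 (phi j) (T t).
pose re j t := a1 j.+1 t * a1 j t + a2 j.+1 t * a2 j t.
pose im j t := a2 j.+1 t * a1 j t - a1 j.+1 t * a2 j t.
have re_pos j t : (j < N)%N -> 0 < re j t.
  move=> hj.
  have d1 := H1 _ _ (mem_set (phi_in j (ltnW hj))) (mem_set (T_in t)) _ (hstep j).1.
  have d2 := H2 _ _ (mem_set (phi_in j (ltnW hj))) (mem_set (T_in t)) _ (hstep j).2.
  have u1 := hu (phi j) (T t); have u2 := hu (phi j.+1) (T t).
  rewrite /re /a1 /a2.
  move: d1 d2 u1 u2; rewrite !ltr_norml.
  move: (k1 (phi j) (T t)) (k2 (phi j) (T t)) (k1 (phi j.+1) (T t)) (k2 (phi j.+1) (T t)).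
  move=> x1 x2 z1 z2 /andP[d1 d1'] /andP[d2 d2'] u1 u2.
  nra.
have unit_w j t : re j t ^+ 2 + im j t ^+ 2 = 1.
  have -> : re j t ^+ 2 + im j t ^+ 2 =
     (a1 j.+1 t ^+ 2 + a2 j.+1 t ^+ 2) * (a1 j t ^+ 2 + a2 j t ^+ 2)
    by rewrite /re /im; ring.
  by rewrite /a1 /a2 !hu mulr1.
pose A t := \sum_(0 <= j < N) atan (im j t / re j t).
have hcos t : cos (A t) = -1.
  have gen j : (j <= N)%N ->
     cos (\sum_(0 <= i < j) atan (im i t / re i t)) = a1 j t * a1 0%N t + a2 j t * a2 0%N t /\
     sin (\sum_(0 <= i < j) atan (im i t / re i t)) = a2 j t * a1 0%N t - a1 j t * a2 0%N t.
    elim: j => [|j IH] hj.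
      rewrite big_nil cos0 sin0 -!expr2 /a1 /a2 hu; split => //; ring.
    have [IHc IHs] := IH (ltnW hj).
    have [cc ss] := atan_cs (re_pos j t hj) (unit_w j t).
    rewrite big_nat_recr //= cosD sinD cc ss IHc IHs.
    exact: alg_step (hu (phi j) (T t)).
  have [-> _] := gen N (leqnn N).
  rewrite /a1 /a2 phiN phi0 o1 o2.
  have := hu (pi / 2) (T t); lra.
have refl j : (j <= N)%N -> a1 j pi = a1 (N - j)%N 0 /\ a2 j pi = a2 (N - j)%N 0.
  move=> hj; rewrite /a1 /a2 Tpi T0 r1 r2.
  have -> : - phi j = phi (N - j)%N by rewrite /phi natrB // mulrBl hNh; lra.
  by [].
have term j : (j < N)%N ->
    atan (im j pi / re j pi) = - atan (im (N - j.+1)%N 0 / re (N - j.+1)%N 0).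
  move=> hj; have e : (N - j)%N = (N - j.+1)%N.+1 by lia.
  have [e1 e2] := refl j (ltnW hj); have [e3 e4] := refl j.+1 hj.
  rewrite /im /re e1 e2 e3 e4 e -atanN; congr atan; rewrite -[in RHS]mulNr; congr (_ * _); [ring | congr GRing.inv; ring].
have hA : A pi = - A 0.
  rewrite /A [in RHS]big_nat_rev -sumrN; apply: eq_big_nat => j /andP[_ hj].
  by rewrite add0n term.
have ca1 j : continuous (a1 j).
  move=> x; have := @continuous_comp _ _ _ (fun t : R => (phi j, T t))
    (fun p : R * R => k1 p.1 p.2) x; apply; last exact: c1.
  by apply: (cvg_pair (G := nbhs (phi j)) (H := nbhs (T x))); [exact: cvg_cst | exact: clamp_cont].
have ca2 j : continuous (a2 j).
  move=> x; have := @continuous_comp _ _ _ (fun t : R => (phi j, T t))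
    (fun p : R * R => k2 p.1 p.2) x; apply; last exact: c2.
  by apply: (cvg_pair (G := nbhs (phi j)) (H := nbhs (T x))); [exact: cvg_cst | exact: clamp_cont].
have cA : continuous A.
  apply: cont_sum' => j hj x.
  apply: (@continuous_comp _ _ _ (fun t => im j t / re j t) atan); last first.
    exact: continuous_atan.
  apply: cvgM.
    by apply: cvgB; apply: cvgM; [exact: ca2|exact: ca1|exact: ca1|exact: ca2].
  apply: cvgV; first by rewrite gt_eqF // re_pos.
  by apply: cvgD; apply: cvgM; [exact: ca1|exact: ca1|exact: ca2|exact: ca2].
have [c _ hc] : exists2 c, c \in `[0, pi]%R & A c = 0.
  apply: IVT; first exact: ltW.
    exact: continuous_subspaceT.
  rewrite hA ge_min le_max; case: (lerP 0 (A 0)) => h1.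
    by apply/andP; split; apply/orP; [right|left]; lra.
  by apply/andP; split; apply/orP; [left|right]; lra.
have := hcos c; rewrite hc cos0; lra.
Qed.
End Core4.
Section Cx.
Variable R : realType.
Local Open Scope complex_scope.

Lemma Re_cont : continuous (fun z : Cplx R => complex.Re z).
Proof.
move=> z; apply/(@cvgrPdist_lt _ _ _ (nbhs z) (nbhs_filter z)) => e e0.
have e0' : 0 < e%:C :> Cplx R by rewrite ltcR.
apply/nbhs_ballP; exists e%:C => // w.
rewrite -ball_normE /= normc_def ltcR.
case: z {e0'} => a b; case: w => c d /=.
move=> H; apply: le_lt_trans H.
rewrite -sqrtr_sqr ler_sqrt ?addr_ge0 ?sqr_ge0 //.
by rewrite lerDl sqr_ge0.
Qed.
Lemma Im_cont : continuous (fun z : Cplx R => complex.Im z).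
Proof.
move=> z; apply/(@cvgrPdist_lt _ _ _ (nbhs z) (nbhs_filter z)) => e e0.
have e0' : 0 < e%:C :> Cplx R by rewrite ltcR.
apply/nbhs_ballP; exists e%:C => // w.
rewrite -ball_normE /= normc_def ltcR.
case: z {e0'} => a b; case: w => c d /=.
move=> H; apply: le_lt_trans H.
rewrite -sqrtr_sqr ler_sqrt ?addr_ge0 ?sqr_ge0 //.
by rewrite lerDr sqr_ge0.
Qed.

Lemma core_cplx (G : R -> R -> Cplx R) :
  continuous (fun p : R * R => G p.1 p.2) ->
  (forall x t, G x t != 0) ->
  (forall t, G (- (pi / 2)) t = - G (pi / 2) t) ->
  (forall x, G x pi = G (- x) 0) -> False.
Proof.
move=> cG nz hodd hrefl.
pose G1 x t := complex.Re (G x t).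
pose G2 x t := complex.Im (G x t).
have pos x t : 0 < G1 x t ^+ 2 + G2 x t ^+ 2.
  have := nz x t; rewrite /G1 /G2; case: (G x t) => a b /= hab.
  rewrite lt0r addr_ge0 ?sqr_ge0 // andbT paddr_eq0 ?sqr_ge0 //.
  rewrite !sqrf_eq0; apply: contra hab => /andP[/eqP -> /eqP ->] //.
pose s x t := Num.sqrt (G1 x t ^+ 2 + G2 x t ^+ 2).
have s0 x t : 0 < s x t by rewrite sqrtr_gt0.
have cG1 : continuous (fun p : R * R => G1 p.1 p.2).
  move=> p; apply: (continuous_comp (cG p)); exact: Re_cont.
have cG2 : continuous (fun p : R * R => G2 p.1 p.2).
  move=> p; apply: (continuous_comp (cG p)); exact: Im_cont.
have cs : continuous (fun p : R * R => s p.1 p.2).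
  move=> p; apply: (continuous_comp (f := fun p : R * R => G1 p.1 p.2 ^+ 2 + G2 p.1 p.2 ^+ 2)).
    by apply: cvgD; rewrite /GRing.exp /=; apply: cvgM; rewrite ?mulr1;
       (try apply: cvgM); first [exact: cG1 | exact: cG2 | exact: cvg_cst].
  exact: sqrt_continuous.
apply: (@core R (fun x t => G1 x t / s x t) (fun x t => G2 x t / s x t)).
- move=> p; apply: cvgM; first exact: cG1.
  by apply: cvgV; [rewrite gt_eqF | exact: cs].
- move=> p; apply: cvgM; first exact: cG2.
  by apply: cvgV; [rewrite gt_eqF | exact: cs].
- move=> x t; rewrite !expr_div_n -mulrDl /s sqr_sqrtr ?divff // ?gt_eqF //.
  exact: ltW.
- move=> t; rewrite /s /G1 /G2 hodd; case: (G (pi / 2) t) => a b /=.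
  by rewrite !sqrrN mulNr.
- move=> t; rewrite /s /G1 /G2 hodd; case: (G (pi / 2) t) => a b /=.
  by rewrite !sqrrN mulNr.
- by move=> x; rewrite /s /G1 /G2 hrefl.
- by move=> x; rewrite /s /G1 /G2 hrefl.
Qed.
End Cx.
Section Geo.
Variable R : realType.
Variable n : nat.

Definition rvec (k : nat) : 'rV[R]_n.+3 := \row_i ((i : nat) == k)%:R.
Definition vec3 (a b c : R) : 'rV[R]_n.+3 := a *: rvec 0 + b *: rvec 1 + c *: rvec 2.

Lemma vec3_sphere (a b c : R) : a ^+ 2 + b ^+ 2 + c ^+ 2 = 1 ->
  vec3 a b c \in @sphere R n.+2.
Proof.
move=> h; apply: mem_set; rewrite /sphere /=.
rewrite 3!big_ord_recl big1 => [|i _]; last first.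
  by rewrite !mxE /= !mulr0 !addr0 expr0n.
rewrite !mxE /= !mulr0 !mulr1 !addr0 !add0r addrA; exact: h.
Qed.

Definition mkS (a b c : R) (h : a ^+ 2 + b ^+ 2 + c ^+ 2 = 1) : Sph R n.+2 :=
  @exist _ (fun x => x \in @sphere R n.+2) (vec3 a b c) (vec3_sphere h).

Lemma mkS_eq a b c a' b' c' (h : a ^+ 2 + b ^+ 2 + c ^+ 2 = 1)
  (h' : a' ^+ 2 + b' ^+ 2 + c' ^+ 2 = 1) :
  a = a' -> b = b' -> c = c' -> mkS h = mkS h'.
Proof. by move=> ???; subst; congr exist; apply: eq_irrelevance. Qed.

Lemma sc_unit (p t : R) :
  (sin p * cos t) ^+ 2 + (sin p * sin t) ^+ 2 + cos p ^+ 2 = 1.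
Proof.
have -> : (sin p * cos t) ^+ 2 + (sin p * sin t) ^+ 2 + cos p ^+ 2 =
  sin p ^+ 2 * (cos t ^+ 2 + sin t ^+ 2) + cos p ^+ 2 by ring.
by rewrite cos2Dsin2 mulr1 addrC cos2Dsin2.
Qed.

Lemma sc_unitN (p t : R) :
  (- (sin p * cos t)) ^+ 2 + (- (sin p * sin t)) ^+ 2 + (- cos p) ^+ 2 = 1.
Proof. by rewrite !sqrrN sc_unit. Qed.

Definition PP (p t : R) : Sph R n.+2 := mkS (sc_unit p t).
Definition QQ (p t : R) : Sph R n.+2 := mkS (sc_unitN p t).

Lemma vec3N a b c : vec3 (- a) (- b) (- c) = - vec3 a b c.
Proof. by rewrite /vec3 !scaleNr !opprD. Qed.

Lemma PQ_val p t : set_val (QQ p t) = - set_val (PP p t).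
Proof. exact: vec3N. Qed.

Lemma cont_vec3 (a b c : R * R -> R) : continuous a -> continuous b -> continuous c ->
  continuous (fun x => vec3 (a x) (b x) (c x)).
Proof.
move=> ca cb cc x; rewrite /vec3.
apply: cvgD; first apply: cvgD.
- by apply: cvgZr_tmp; exact: ca.
- by apply: cvgZr_tmp; exact: cb.
- by apply: cvgZr_tmp; exact: cc.
Qed.

Lemma cont_mkS (a b c : R * R -> R) (h : forall x, a x ^+ 2 + b x ^+ 2 + c x ^+ 2 = 1) :
  continuous a -> continuous b -> continuous c ->
  continuous (fun x => mkS (h x)).
Proof.
move=> ca cb cc; apply: (@continuous_comp_initial _ _ _ set_val).
exact: cont_vec3.
Qed.

End Geo.
Lemma sph_nonself (R : realType) (m : nat) (x : Sph R m) : set_val x <> - set_val x.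
Proof.
move=> e.
have v0 : set_val x = 0.
  have h2 : (2 : R) *: set_val x = 0.
    by rewrite scaler_nat mulr2n {2}e subrr.
  by move/eqP: h2; rewrite scaler_eq0 pnatr_eq0 /= => /eqP.
have := set_valP x; rewrite -set_valE /sphere /= v0.
rewrite big1 => [|i _]; last by rewrite mxE expr0n.
by move=> /esym/eqP; rewrite oner_eq0.
Qed.

Lemma proj_eq (R : realType) (m : nat) (x y : Sph R m) :
  set_val x = - set_val y -> proj_RP x = proj_RP y.
Proof.
move=> h; rewrite /proj_RP; apply/eqquotP; rewrite /= /antipodal h eqxx orbT //.
Qed.

Unset Implicit Arguments.
Theorem mainTheorem15 (R : realType) (n : nat) (hn : (2 <= n)%N) :
  ~ exists F : ((RP R n * S1 R)%type * Cplx R)%type -> Cplx R,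
      weierstrass_entire_family F /\
      equivalent_coverings (@prod_cover R n) (@proj1Z R _ F).
Proof.
case: n hn => [|[|n]] // _.
move=> [F [_ [hm [gm [ch _ hgK _ hcomm]]]]].
pose f (x : Sph R n.+2) : Cplx R := (set_val (hm (x, 0))).2.
have f_ne x y : set_val y = - set_val x -> f x - f y != 0.
  move=> hxy; rewrite subr_eq0; apply/eqP => e.
  have e1 : proj1Z (hm (x, 0)) = proj1Z (hm (y, 0)).
    rewrite !hcomm /prod_cover /=; congr pair; apply: proj_eq.
    by rewrite hxy opprK.
  have : hm (x, 0) = hm (y, 0).
    apply: val_inj; rewrite [LHS]surjective_pairing [RHS]surjective_pairing.
    by congr pair.
  move/(congr1 gm); rewrite !hgK => -[exy].
  by apply: (@sph_nonself R n.+2 x); rewrite {1}exy.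
pose G x t := f (PP n x t) - f (QQ n x t).
apply: (@core_cplx R G).
- have cS (S : R * R -> Sph R n.+2) : continuous S -> continuous (fun p => f (S p)).
    move=> cS p.
    have c1 : {for p, continuous (fun q => set_val (hm (S q, 0)))}.
      apply: (continuous_comp (f := fun q => hm (S q, 0))); last exact: initial_continuous.
      apply: (continuous_comp (f := fun q => (S q, 0))); last exact: ch.
      by apply: (cvg_pair (G := nbhs (S p)) (H := nbhs 0)); [exact: cS | exact: cvg_cst].
    exact: (continuous_comp c1 (@cvg_snd _ _ _ _ _)).
  have csf : continuous (fun x : R * R => sin x.1).
    by move=> x; apply: (continuous_comp (@cvg_fst _ _ _ _ _)); exact: continuous_sin.
  have ccf : continuous (fun x : R * R => cos x.1).
    by move=> x; apply: (continuous_comp (@cvg_fst _ _ _ _ _)); exact: continuous_cos.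
  have css : continuous (fun x : R * R => sin x.2).
    by move=> x; apply: (continuous_comp (@cvg_snd _ _ _ _ _)); exact: continuous_sin.
  have ccs : continuous (fun x : R * R => cos x.2).
    by move=> x; apply: (continuous_comp (@cvg_snd _ _ _ _ _)); exact: continuous_cos.
  have cP : continuous (fun p : R * R => PP n p.1 p.2).
    apply: (cont_mkS (h := fun x => sc_unit x.1 x.2)) => x.
    - by apply: cvgM; [exact: csf | exact: ccs].
    - by apply: cvgM; [exact: csf | exact: css].
    - exact: ccf.
  have cQ : continuous (fun p : R * R => QQ n p.1 p.2).
    apply: (cont_mkS (h := fun x => sc_unitN x.1 x.2)) => x; apply: cvgN.
    - by apply: cvgM; [exact: csf | exact: ccs].
    - by apply: cvgM; [exact: csf | exact: css].
    - exact: ccf.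
  move=> p; apply: cvgB; [exact: (cS _ cP p) | exact: (cS _ cQ p)].
- by move=> x t; apply: f_ne; exact: PQ_val.
- move=> t; rewrite /G opprB; congr (f _ - f _); apply: mkS_eq;
    rewrite ?sinN ?cosN ?sin_pihalf ?cos_pihalf ?mul1r ?mulN1r ?oppr0 ?opprK //.
- move=> x; rewrite /G; congr (f _ - f _); apply: mkS_eq;
    rewrite ?sinN ?cosN ?sinpi ?cospi ?sin0 ?cos0 ?mulr0 ?mulr1 ?mulrN1 ?mulNr ?oppr0 //.
Qed.
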